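(* Let $R$ be a commutative associative ring with unity, let $\operatorname{T}=\{x_1,x_2,\ldots\}$ be a trivial quandle with more than one element, $A=R[\operatorname{T}]$, $L=A^{(-)}$, and for $k\ge1$ let $L^k$ be the subalgebra of $L$ generated by products of $k$ elements of $L$. Then: (1) $L^2=L^3$, and this algebra has basis $\{x_1-x_2,\,x_2-x_3,\,\ldots\}$; in particular, if $\operatorname{T}$ has $n$ elements, then $L^2$ has rank $n-1$. (2) $(L^2)^2=0$, i.e. $L$ is metabelian. (3) If moreover $1/2\in R$ and $J=A^{(+)}$, then $J^2=J$.
   Context: A trivial quandle is a set $\operatorname{T}$ with operation $xy=x$ for all $x,y$. The quandle ring $R[\operatorname{T}]$ is the free $R$-module with basis $\operatorname{T}$, with multiplication $\big(\sum_i\alpha_i x_i\big)\big(\sum_j\beta_j x_j\big)=\sum_{i,j}\alpha_i\beta_j (x_ix_j)$. For an $R$-algebra $A$, $A^{(-)}$ is the same $R$-module with multiplication $x\circ y=xy-yx$, and (when $1/2\in R$) $A^{(+)}$ is the same $R$-module with multiplication $x\odot y=\tfrac12(xy+yx)$. For an algebra $B$, $B^2$ denotes the subalgebra generated by all products of two elements of $B$. *)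

(* Defs.v *)
From HB Require Import structures.
From mathcomp Require Import all_boot all_order all_algebra.
From mathcomp Require Import finmap.
From mathcomp.multinomials Require Export monalg.
Set Implicit Arguments. Unset Strict Implicit. Unset Printing Implicit Defensive.
Import Order.TTheory GRing.Theory Num.Theory.
Local Open Scope ring_scope.

(* Free R-module with basis nat: finitely supported functions nat -> R.
   The generator x_i (paper's x_{i+1}, 0-based) is << i >>. *)
Notation FM R := {malg R[nat]}.

(* The underlying set of the quandle T = {x_0, x_1, ...}: either the first n
   indices (N = Some n) or all of nat (N = None, countably infinite T). *)
Definition Tset (N : option nat) : pred nat :=
  fun i => if N is Some n then (i < n)%N else true.

(* Elements of the quandle ring R[T]: finitely supported with support in T. *)
Definition inA (R : comNzRingType) (N : option nat) (f : FM R) : Prop :=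
  {subset msupp f <= Tset N}.

Definition qmul (R : comNzRingType) (op : nat -> nat -> nat) (f g : FM R) : FM R :=
  \sum_(x <- msupp f) \sum_(y <- msupp g) (f@_x * g@_y) *: << op x y >>.

Definition triv_op (x y : nat) : nat := x.

Definition lie_mul (R : comNzRingType) (f g : FM R) : FM R :=
  qmul triv_op f g - qmul triv_op g f.

(* A^(+):  u . v = (1/2)(uv + vu), where h is the inverse of 2 in R. *)
Definition jor_mul (R : comNzRingType) (h : R) (f g : FM R) : FM R :=
  h *: (qmul triv_op f g + qmul triv_op g f).

Inductive prods (R : comNzRingType) (mul : FM R -> FM R -> FM R) (S : FM R -> Prop)
  : nat -> FM R -> Prop :=
| prods1 a : S a -> prods mul S 1 a
| prodsM i j a b : prods mul S i a -> prods mul S j b -> prods mul S (i + j) (mul a b).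

Inductive gen (R : comNzRingType) (mul : FM R -> FM R -> FM R) (G : FM R -> Prop)
  : FM R -> Prop :=
| gen_in a : G a -> gen mul G a
| gen0 : gen mul G 0
| genD a b : gen mul G a -> gen mul G b -> gen mul G (a + b)
| genZ (c : R) a : gen mul G a -> gen mul G (c *: a)
| genM a b : gen mul G a -> gen mul G b -> gen mul G (mul a b).

Definition alg_pow (R : comNzRingType) (mul : FM R -> FM R -> FM R) (B : FM R -> Prop)
  (k : nat) : FM R -> Prop := gen mul (prods mul B k).

Definition is_basis (R : comNzRingType) (S : FM R -> Prop) (J : pred nat)
    (b : nat -> FM R) : Prop :=
  [/\ forall i, J i -> S (b i),
      (forall f, S f -> exists (s : seq nat) (c : nat -> R),
          all J s /\ f = \sum_(i <- s) c i *: b i)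
    & (forall (s : seq nat) (c : nat -> R), uniq s -> all J s ->
          \sum_(i <- s) c i *: b i = 0 -> forall i, i \in s -> c i = 0)].

Definition diffb (R : comNzRingType) (i : nat) : FM R := << i >> - << i.+1 >>.

(* Main.v *)
Require Import Defs.
From HB Require Import structures.
From mathcomp Require Import all_boot all_order all_algebra.
From mathcomp Require Import finmap.
From mathcomp.multinomials Require Import monalg.
Set Implicit Arguments. Unset Strict Implicit. Unset Printing Implicit Defensive.
Import Order.TTheory GRing.Theory Num.Theory.
Local Open Scope ring_scope.

Section S.
Variable R : comNzRingType.
Implicit Types f g : FM R.

Definition eps f : R := \sum_(k <- msupp f) f@_k.

Lemma epsEw f (d : {fset nat}) : (msupp f `<=` d)%fset -> eps f = \sum_(k <- d) f@_k.
Proof.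
move=> le; rewrite /eps [LHS](big_fset_incl _ le) => //= x xd /mcoeff_outdom -> //.
Qed.

Lemma epsD f g : eps (f + g) = eps f + eps g.
Proof.
set d := (msupp f `|` msupp g `|` msupp (f + g))%fset.
have h1 : (msupp f `<=` d)%fset by rewrite /d -fsetUA fsubsetUl.
have h2 : (msupp g `<=` d)%fset by rewrite /d -fsetUA fsubsetU // fsubsetUl orbT.
have h3 : (msupp (f+g) `<=` d)%fset by rewrite /d fsubsetUr.
rewrite (epsEw h1) (epsEw h2) (epsEw h3) -big_split /=.
by apply: eq_bigr => k _; rewrite mcoeffD.
Qed.

Lemma epsZ c f : eps (c *: f) = c * eps f.
Proof.
rewrite (epsEw (msuppZ_le c f)) /eps mulr_sumr.
by apply: eq_bigr => k _; rewrite mcoeffZ.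
Qed.

Lemma eps0 : eps 0 = 0.
Proof. by rewrite /eps msupp0 big_nil. Qed.

Lemma epsN f : eps (- f) = - eps f.
Proof. by rewrite -scaleN1r epsZ mulN1r. Qed.

Lemma epsB f g : eps (f - g) = eps f - eps g.
Proof. by rewrite epsD epsN. Qed.

Lemma epsU i : eps (<< i >> : FM R) = 1.
Proof. by rewrite /eps msuppU oner_eq0 big_seq_fset1 mcoeffUU. Qed.

Lemma malgUZ (c : R) i : << c *g i >> = c *: (<< i >> : FM R).
Proof. by apply/malgP => k; rewrite mcoeffZ !mcoeffU mulr_natr. Qed.

Lemma malgEZ f : f = \sum_(k <- msupp f) f@_k *: << k >>.
Proof. by rewrite {1}(monalgE f); apply: eq_bigr => k _; rewrite malgUZ. Qed.

Lemma qmulE f g : qmul triv_op f g = eps g *: f.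
Proof.
rewrite /qmul {3}(malgEZ f) scaler_sumr; apply: eq_bigr => x _.
rewrite /triv_op -scaler_suml scalerA /eps; congr (_ *: _).
by rewrite -mulr_sumr mulrC.
Qed.

Lemma lieE f g : lie_mul f g = eps g *: f - eps f *: g.
Proof. by rewrite /lie_mul !qmulE. Qed.

Lemma eps_lie f g : eps (lie_mul f g) = 0.
Proof. by rewrite lieE epsB !epsZ mulrC subrr. Qed.

Lemma jorE h f g : jor_mul h f g = h *: (eps g *: f + eps f *: g).
Proof. by rewrite /jor_mul !qmulE. Qed.


Variable N : option nat.
Hypothesis HT0 : Tset N 0.

Lemma inA0 : inA N (0 : FM R).
Proof. by move=> x; rewrite msupp0 in_fset0. Qed.

Lemma inAD f g : inA N f -> inA N g -> inA N (f + g).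
Proof.
move=> hf hg x /(fsubsetP (msuppD_le f g)); rewrite in_fsetU => /orP[].
  exact: hf.
exact: hg.
Qed.

Lemma inAZ c f : inA N f -> inA N (c *: f).
Proof. by move=> hf x /(fsubsetP (msuppZ_le c f)); apply: hf. Qed.

Lemma inAB f g : inA N f -> inA N g -> inA N (f - g).
Proof. by move=> hf hg; apply: inAD => //; rewrite -scaleN1r; apply: inAZ. Qed.

Lemma inAU i : Tset N i -> inA N (<< i >> : FM R).
Proof. by move=> hi x; rewrite msuppU oner_eq0 in_fset1 => /eqP ->. Qed.

Lemma gen_sum (mul : FM R -> FM R -> FM R) G (s : seq nat) (F : nat -> FM R) :
  (forall i, i \in s -> gen mul G (F i)) -> gen mul G (\sum_(i <- s) F i).
Proof.
elim: s => [|a s IH] H; first by rewrite big_nil; apply: gen0.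
rewrite big_cons; apply: genD; first by apply: H; rewrite inE eqxx.
by apply: IH => i hi; apply: H; rewrite inE hi orbT.
Qed.

Lemma Tset_le a b : (b <= a)%N -> Tset N a -> Tset N b.
Proof. by case: N => //= n ba an; apply: leq_ltn_trans ba an. Qed.

Lemma diffb_tele (i : nat) :
  \sum_(0 <= k < i) diffb R k = << 0%N >> - << i >>.
Proof.
rewrite /diffb.
have -> : \sum_(0 <= k < i) (<< k >> - << k.+1 >> : FM R)
   = - \sum_(0 <= k < i) (<< k.+1 >> - << k >> : FM R).
  by rewrite -sumrN; apply: eq_bigr => k _; rewrite opprB.
by rewrite telescope_sumr // opprB.
Qed.

Lemma span f : inA N f -> eps f = 0 ->
  exists (s : seq nat) (c : nat -> R),
    all (fun i => Tset N i.+1) s /\ f = \sum_(i <- s) c i *: diffb R i.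
Proof.
move=> hf he.
pose m := (\max_(i <- msupp f) i)%N.
have Tm : Tset N m.
  rewrite /m big_seq; apply: (big_ind (Tset N)) => //.
    by move=> a b; case: (N) => //= n; rewrite gtn_max => -> ->.
have lem : forall i, i \in msupp f -> (i <= m)%N.
  by move=> i hi; rewrite /m; apply: (@leq_bigmax_seq _ _ xpredT (fun i => i) i hi).
exists (index_iota 0 m).
exists (fun k => \sum_(i <- msupp f) (if (k < i)%N then - f@_i else 0)).
split.
  apply/allP => k; rewrite mem_index_iota => /andP[_ km].
  exact: Tset_le km Tm.
under eq_bigr do rewrite scaler_suml.
rewrite exchange_big /=.
have -> : \sum_(j <- msupp f) \sum_(i <- index_iota 0 m)
     (if (i < j)%N then - f@_j else 0) *: diffb R i
   = \sum_(j <- msupp f) (- f@_j) *: (<< 0%N >> - << j >>).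
  rewrite big_seq [RHS]big_seq; apply: eq_bigr => j hj.
  rewrite -diffb_tele (big_nat_widen 0 j m xpredT _ (lem j hj)) scaler_sumr [RHS]big_mkcond /=.
  by apply: eq_bigr => k _; case: ifP => _; rewrite ?scale0r.
under eq_bigr do rewrite scaleNr -scalerN opprB scalerBr.
rewrite sumrB -malgEZ -scaler_suml.
by rewrite -/(eps f) he scale0r subr0.
Qed.


Lemma sum_delta (s : seq nat) (c : nat -> R) k : uniq s ->
  \sum_(i <- s) c i * (i == k)%:R = if k \in s then c k else 0.
Proof.
move=> us; case: ifP => ks.
  rewrite (bigD1_seq k) //= eqxx mulr1 big1 ?addr0 // => i /negbTE ->.
  by rewrite mulr0.
rewrite big1_seq // => i /andP[_ hi]; case: eqP => [e|_]; last by rewrite mulr0.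
by rewrite -e hi in ks.
Qed.

Lemma indep (s : seq nat) (c : nat -> R) : uniq s ->
  \sum_(i <- s) c i *: diffb R i = 0 -> forall i, i \in s -> c i = 0.
Proof.
move=> us H.
have hk k : \sum_(i <- s) c i * (i == k)%:R - \sum_(i <- s) c i * (i.+1 == k)%:R = 0.
  have := congr1 (mcoeff k) H; rewrite raddf_sum mcoeff0 /= => E.
  rewrite -[RHS]E -sumrB; apply: eq_bigr => i _.
  by rewrite mcoeffZ /diffb mcoeffB !mcoeffU mulrBr.
elim=> [|k IH] ks.
  move: (hk 0%N); rewrite sum_delta // ks big1 ?subr0 // => i _.
  by rewrite mulr0.
move: (hk k.+1); rewrite sum_delta // ks.
have -> : \sum_(i <- s) c i * (i.+1 == k.+1)%:R = \sum_(i <- s) c i * (i == k)%:R.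
  by apply: eq_bigr => i _; rewrite eqSS.
rewrite sum_delta //; case: ifP => hs; first by rewrite IH // subr0.
by rewrite subr0.
Qed.

Lemma prods_lie k a : prods (@lie_mul R) (inA N) k a ->
  inA N a /\ ((k == 1)%N || (eps a == 0)).
Proof.
elim => [b hb | i j b c _ [hb _] _ [hc _]]; first by split; rewrite ?eqxx.
split; last by rewrite eps_lie eqxx orbT.
by rewrite lieE; apply: inAB; apply: inAZ.
Qed.

Lemma gen_lie (P : FM R -> Prop) f : (forall a, P a -> inA N a /\ eps a = 0) ->
  gen (@lie_mul R) P f -> inA N f /\ eps f = 0.
Proof.
move=> HP; elim => {f} [a /HP //| | a b _ [ha ea] _ [hb eb] | c a _ [ha ea]
  | a b _ [ha _] _ [hb _]].
- split; [exact: inA0 | exact: eps0].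
- split; [exact: inAD | by rewrite epsD ea eb addr0].
- split; [exact: inAZ | by rewrite epsZ ea mulr0].
- split; [by rewrite lieE; apply: inAB; apply: inAZ | exact: eps_lie].
Qed.

Lemma lie_eps0 a b : eps a = 0 -> eps b = 0 -> lie_mul a b = 0.
Proof. by rewrite lieE => -> ->; rewrite !scale0r subr0. Qed.

Lemma prods_lie2 (S : FM R -> Prop) k a : (forall a, S a -> eps a = 0) ->
  prods (@lie_mul R) S k a -> eps a = 0 /\ ((k == 1)%N || (a == 0)).
Proof.
move=> HS; elim => [b hb | i j b c _ [eb _] _ [ec _]].
  by split; [exact: HS | rewrite eqxx].
by split; [exact: eps_lie | rewrite lie_eps0 // eqxx orbT].
Qed.

Lemma gen_zero (P : FM R -> Prop) f : (forall a, P a -> a = 0) ->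
  gen (@lie_mul R) P f -> f = 0.
Proof.
move=> HP; elim => {f} [a /HP //| // | a b _ -> _ -> | c a _ -> | a b _ -> _ ->].
- by rewrite addr0.
- by rewrite scaler0.
- by rewrite lieE !scaler0 subr0.
Qed.

Lemma prods_jor (h : R) k a : prods (jor_mul h) (inA N) k a -> inA N a.
Proof.
elim => [b hb // | i j b c _ hb _ hc].
by rewrite jorE; apply: inAZ; apply: inAD; apply: inAZ.
Qed.

Lemma gen_jor (h : R) (P : FM R -> Prop) f : (forall a, P a -> inA N a) ->
  gen (jor_mul h) P f -> inA N f.
Proof.
move=> HP; elim => {f} [a /HP //| | a b _ ha _ hb | c a _ ha | a b _ ha _ hb].
- exact: inA0.
- exact: inAD.
- exact: inAZ.
- by rewrite jorE; apply: inAZ; apply: inAD; apply: inAZ.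
Qed.

Lemma diffb_lie i : diffb R i = lie_mul << i >> << i.+1 >>.
Proof. by rewrite lieE !epsU !scale1r. Qed.

Lemma diffb_lie3 i : diffb R i = lie_mul (lie_mul << i >> << i.+1 >>) << i.+1 >>.
Proof. by rewrite [in RHS]lieE eps_lie epsU scale1r scale0r subr0 diffb_lie. Qed.

End S.

Lemma L23char (R : comNzRingType) (N : option nat) (HT0 : Tset N 0) k (f : FM R) :
  (k == 2)%N || (k == 3)%N ->
  alg_pow (@lie_mul R) (inA N) k f <-> inA N f /\ eps f = 0.
Proof.
move=> hk; split.
  apply: gen_lie => a /prods_lie [ha /orP[/eqP ek|/eqP ea]] //.
  by move: hk; rewrite ek.
case=> hf ef; have [s [c [/allP hs ->]]] := span HT0 hf ef.
apply: gen_sum => i /hs hi; apply: genZ; apply: gen_in.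
have hi0 : Tset N i by apply: Tset_le hi; apply: leqnSn.
case/orP: hk => /eqP ->.
  rewrite diffb_lie; apply: (@prodsM _ _ _ 1 1); apply: prods1; exact: inAU.
rewrite diffb_lie3; apply: (@prodsM _ _ _ 2 1); last by apply: prods1; exact: inAU.
by apply: (@prodsM _ _ _ 1 1); apply: prods1; exact: inAU.
Qed.

Unset Implicit Arguments.
Theorem theorem8p3 (R : comNzRingType) (N : option nat)
  (HT : if N is Some n then (1 < n)%N else true) :
  let A := @inA R N in
  let L := A in (* L = A^(-) has the same underlying module as A *)
  [/\ (* (1) L^2 = L^3, with basis {x_i - x_(i+1)}, hence rank n-1 if |T| = n *)
      (forall f : FM R, alg_pow (@lie_mul R) L 2 f <-> alg_pow (@lie_mul R) L 3 f),
      is_basis (alg_pow (@lie_mul R) L 2) (fun i => Tset N i.+1) (@diffb R),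
      (* (2) (L^2)^2 = 0 *)
      (forall f : FM R,
          alg_pow (@lie_mul R) (alg_pow (@lie_mul R) L 2) 2 f -> f = 0)
    & (* (3) if 1/2 in R, J = A^(+) satisfies J^2 = J *)
      (forall h : R, h * 2%:R = 1 ->
          forall f : FM R, alg_pow (jor_mul h) A 2 f <-> A f)].
Proof.
move=> A L; rewrite /L /A.
have HT0 : Tset N 0 by case: (N) HT => //= n /ltnW.
have L2 := @L23char R N HT0 2%N _ isT.
have L3 := @L23char R N HT0 3%N _ isT.
split.
- by move=> f; rewrite L2 L3.
- split.
  + move=> i hi; apply/L2; split; last by rewrite /diffb epsB !epsU subrr.
    by apply: inAB; apply: inAU => //; apply: Tset_le hi; apply: leqnSn.
  + by move=> f /L2 [hf ef]; apply: span.
  + by move=> s c us _; apply: indep.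
- move=> f; apply: gen_zero => a /(prods_lie2 (S := alg_pow (@lie_mul R) (inA N) 2)).
  case=> [b /L2 [] //|_ /orP[//|/eqP //]].
- move=> h hh f; split; first by apply: gen_jor => a; apply: prods_jor.
  move=> hf; rewrite (malgEZ f); apply: gen_sum => i hi; apply: genZ; apply: gen_in.
  have -> : (<< i >> : FM R) = jor_mul h << i >> << i >>.
    by rewrite jorE !epsU !scale1r -mulr2n -scaler_nat scalerA hh scale1r.
  by apply: (@prodsM _ _ _ 1 1); apply: prods1; apply: inAU; apply: hf.
Qed.
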